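(* Let $v_0>0$, let $S$ be a finite nonempty index set, let $x_i\in\mathbb R^d$ with $\|x_i\|_2\le1$ for $i\in S$, and let $(y_i)_{i\in S\cup\{0\}}\in\{0,1\}^{S\cup\{0\}}$ with $\sum_i y_i=1$. Define $$\ell(\mathbf w)=-\sum_{i\in S\cup\{0\}}y_i\log p(i\mid\mathbf w),\quad p(i\mid\mathbf w)=\frac{e^{x_i^\top\mathbf w}}{v_0+\sum_{j\in S}e^{x_j^\top\mathbf w}}\ (i\in S),\quad p(0\mid\mathbf w)=\frac{v_0}{v_0+\sum_{j\in S}e^{x_j^\top\mathbf w}}.$$ Then $\ell$ is $3\sqrt2$-self-concordant-like: for all $\mathbf a,\mathbf b\in\mathbb R^d$, the function $\phi(s)=\ell(\mathbf a+s\mathbf b)$ satisfies $|\phi'''(s)|\le 3\sqrt2\,\|\mathbf b\|_2\,\phi''(s)$ for all $s\in\mathbb R$. In particular the constant does not depend on $|S|$. *)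

(* Defs.v *)
From Stdlib Require Import Reals Lra.
From Coquelicot Require Import Coquelicot.
Open Scope R_scope.

Fixpoint rsum (n : nat) (f : nat -> R) : R :=
  match n with
  | O => 0
  | S m => rsum m f + f m
  end.

(* Vectors of R^d are represented as functions nat -> R, coordinates 0..d-1. *)
Definition dot (d : nat) (u v : nat -> R) : R := rsum d (fun k => u k * v k).
Definition norm2 (d : nat) (u : nat -> R) : R := sqrt (dot d u u).

(* S = {1,...,n}, outside option = 0. x i is the feature vector of item i. *)
Definition mnl_denom (d n : nat) (v0 : R) (x : nat -> nat -> R) (w : nat -> R) : R :=
  v0 + rsum n (fun j => exp (dot d (x (S j)) w)).

Definition mnl_prob (d n : nat) (v0 : R) (x : nat -> nat -> R) (w : nat -> R)
  (i : nat) : R :=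
  match i with
  | O => v0 / mnl_denom d n v0 x w
  | S _ => exp (dot d (x i) w) / mnl_denom d n v0 x w
  end.

Definition mnl_loss (d n : nat) (v0 : R) (x : nat -> nat -> R) (y : nat -> R)
  (w : nat -> R) : R :=
  - rsum (S n) (fun i => y i * ln (mnl_prob d n v0 x w i)).

(* Main.v *)
Require Import Defs.
From Stdlib Require Import Reals Lra Psatz.
From Coquelicot Require Import Coquelicot.
Open Scope R_scope.

Lemma rsum_ext n f g : (forall k, (k < n)%nat -> f k = g k) -> rsum n f = rsum n g.
Proof. induction n; simpl; intros H; auto. rewrite IHn by (intros; apply H; lia). rewrite H by lia. ring. Qed.
Lemma rsum_plus n f g : rsum n (fun k => f k + g k) = rsum n f + rsum n g.
Proof. induction n; simpl; [ring|rewrite IHn; ring]. Qed.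
Lemma rsum_scal n c f : rsum n (fun k => c * f k) = c * rsum n f.
Proof. induction n; simpl; [ring|rewrite IHn; ring]. Qed.
Lemma rsum_le n f g : (forall k, (k < n)%nat -> f k <= g k) -> rsum n f <= rsum n g.
Proof. induction n; simpl; intros H; [lra|]. assert (H1 := H n ltac:(lia)). assert (rsum n f <= rsum n g) by (apply IHn; intros; apply H; lia). lra. Qed.
Lemma rsum_abs n f : Rabs (rsum n f) <= rsum n (fun k => Rabs (f k)).
Proof. induction n; simpl. rewrite Rabs_R0; lra. eapply Rle_trans. apply Rabs_triang. lra. Qed.
Lemma rsum_nonneg n f : (forall k, (k < n)%nat -> 0 <= f k) -> 0 <= rsum n f.
Proof. intros H. replace 0 with (rsum n (fun _ => 0)). apply rsum_le; auto. induction n; simpl; auto. rewrite IHn; [ring|intros; apply H; lia]. Qed.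

Lemma dot_lin d v a b t : dot d v (fun k => a k + t * b k) = dot d v a + t * dot d v b.
Proof. unfold dot; induction d; simpl; [ring|rewrite IHd; ring]. Qed.

Lemma cs d v w : (dot d v w)^2 <= dot d v v * dot d w w.
Proof.
  unfold dot; induction d; simpl. lra.
  set (A := rsum d (fun k => v k * w k)) in *.
  set (P := rsum d (fun k => v k * v k)) in *.
  set (Q := rsum d (fun k => w k * w k)) in *.
  assert (0 <= P) by (apply rsum_nonneg; intros; nra).
  assert (0 <= Q) by (apply rsum_nonneg; intros; nra).
  set (a := v d) ; set (b := w d).
  assert (2*A*a*b <= P*b*b + Q*a*a).
  { assert (0 <= P*b*b + Q*a*a) by nra.
    assert (0 <= (a*b)^2 * (P*Q - A^2)) by (apply Rmult_le_pos; [apply pow2_ge_0|lra]).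
    assert (0 <= (P*b*b - Q*a*a)^2) by apply pow2_ge_0.
    assert ((2*A*a*b)^2 <= (P*b*b + Q*a*a)^2) by nra.
    destruct (Rle_dec (2*A*a*b) 0). lra.
    nra. }
  nra.
Qed.

Lemma is_derive_eq (f : R -> R) x l1 l2 : is_derive f x l1 -> l1 = l2 -> is_derive f x l2.
Proof. intros H ->; exact H. Qed.

Lemma is_derive_rsum n (F F' : nat -> R -> R) t :
  (forall k, is_derive (F k) t (F' k t)) ->
  is_derive (fun s => rsum n (fun k => F k s)) t (rsum n (fun k => F' k t)).
Proof.
  intros H; induction n; simpl.
  - eapply is_derive_eq. apply is_derive_const. reflexivity.
  - apply (is_derive_plus (fun s => rsum n (fun k => F k s)) (F n)); auto.
Qed.

Definition Sm n (c u : nat -> R) m t := rsum n (fun k => u k ^ m * exp (c k + u k * t)).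

Lemma Sm_deriv n c u m t : is_derive (Sm n c u m) t (Sm n c u (S m) t).
Proof.
  unfold Sm. apply (is_derive_rsum n (fun k s => u k ^ m * exp (c k + u k * s)) (fun k s => u k ^ S m * exp (c k + u k * s))).
  intros k. auto_derive. auto. simpl. ring.
Qed.

Lemma Sm_D n c u m t : Derive (Sm n c u m) t = Sm n c u (S m) t.
Proof. apply is_derive_unique, Sm_deriv. Qed.
Lemma Sm_ex n c u m t : ex_derive (Sm n c u m) t.
Proof. eexists; apply Sm_deriv. Qed.

Lemma Sm0_nonneg n c u t : 0 <= Sm n c u 0 t.
Proof. apply rsum_nonneg; intros; simpl; rewrite Rmult_1_l; apply Rlt_le, exp_pos. Qed.


Lemma Sm_D' n c u m t : Derive (fun x => Sm n c u m x) t = Sm n c u (S m) t.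
Proof. apply Sm_D. Qed.
Lemma Sm_ex' n c u m t : ex_derive (fun x => Sm n c u m x) t.
Proof. apply Sm_ex. Qed.

Section Main.
Variables (n : nat) (c u : nat -> R) (v0 K L : R).
Hypothesis Hv0 : 0 < v0.
Let D t := v0 + Sm n c u 0 t.
Let S1 := Sm n c u 1. Let S2 := Sm n c u 2. Let S3 := Sm n c u 3.
Let f t := - (K + t * L) + ln (v0 + Sm n c u 0 t).
Let g1 t := - L + Sm n c u 1 t / (v0 + Sm n c u 0 t).
Let g2 t := Sm n c u 2 t / (v0 + Sm n c u 0 t) - Sm n c u 1 t * Sm n c u 1 t / ((v0 + Sm n c u 0 t) * (v0 + Sm n c u 0 t)).
Let g3 t := S3 t / D t - 3 * S1 t * S2 t / (D t * D t) + 2 * S1 t * S1 t * S1 t / (D t * D t * D t).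

Lemma Dpos t : 0 < v0 + Sm n c u 0 t.
Proof. assert (H0 := Sm0_nonneg n c u t). lra. Qed.

Lemma f1 t : Derive_n f 1 t = g1 t.
Proof.
  simpl. apply is_derive_unique. unfold f, g1. assert (H := Dpos t).
  auto_derive. repeat split; auto using Sm_ex'.
  rewrite Sm_D'. field. lra.
Qed.

Lemma f2 t : Derive_n f 2 t = g2 t.
Proof.
  change (Derive (Derive_n f 1) t = g2 t). rewrite (Derive_ext _ _ t f1).
  apply is_derive_unique. unfold g1, g2. assert (H := Dpos t).
  auto_derive. repeat split; auto using Sm_ex'; lra.
  rewrite !Sm_D'. field. lra.
Qed.

Lemma f3 t : Derive_n f 3 t = g3 t.
Proof.
  change (Derive (Derive_n f 2) t = g3 t). rewrite (Derive_ext _ _ t f2).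
  apply is_derive_unique. unfold g2, g3, D, S1, S2, S3. assert (H := Dpos t).
  auto_derive. repeat split; auto using Sm_ex'; nra.
  rewrite !Sm_D'. field. lra.
Qed.

End Main.

Lemma alg (v0 S0 S1 S2 S3 V T B : R) :
  0 < v0 -> 0 <= S0 -> 0 <= B -> 0 <= V ->
  V = S2 - 2 * (S1/(v0+S0)) * S1 + (S1/(v0+S0))^2 * S0 ->
  T = S3 - 3 * (S1/(v0+S0)) * S2 + 3 * (S1/(v0+S0))^2 * S1 - (S1/(v0+S0))^3 * S0 ->
  Rabs S1 <= B * S0 ->
  Rabs T <= 2 * B * V ->
  let D := v0 + S0 in
  Rabs (S3 / D - 3 * S1 * S2 / (D * D) + 2 * S1 * S1 * S1 / (D * D * D))
  <= 2 * B * (S2 / D - S1 * S1 / (D * D)) /\ 0 <= S2 / D - S1 * S1 / (D * D).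
Proof.
  intros Hv HS HB HV EV ET H1 HT D.
  assert (HD : 0 < D) by (unfold D; lra).
  set (mu := S1 / D).
  assert (Hmu : Rabs mu <= B).
  { unfold mu. rewrite Rabs_div by lra. rewrite (Rabs_pos_eq D) by lra.
    apply Rmult_le_reg_r with D; auto. field_simplify; try lra. 
    unfold D; nra. }
  assert (E2 : S2 / D - S1 * S1 / (D * D) = (v0 * mu^2 + V) / D).
  { rewrite EV. unfold mu, D. field. unfold D in HD; lra. }
  assert (E3 : S3 / D - 3 * S1 * S2 / (D * D) + 2 * S1 * S1 * S1 / (D * D * D) = (- v0 * mu^3 + T) / D).
  { rewrite ET. unfold mu, D. field. unfold D in HD; lra. }
  rewrite E2, E3.
  assert (0 <= mu^2) by apply pow2_ge_0.
  split; [|apply Rmult_le_pos; [nra| apply Rlt_le, Rinv_0_lt_compat; lra]].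
  rewrite Rabs_div by lra. rewrite (Rabs_pos_eq D) by lra.
  unfold Rdiv. rewrite <- Rmult_assoc. apply Rmult_le_compat_r. apply Rlt_le, Rinv_0_lt_compat; lra.
  eapply Rle_trans. apply Rabs_triang.
  assert (Rabs (- v0 * mu ^ 3) <= v0 * (2 * B * mu^2)).
  { rewrite Rabs_mult, Rabs_Ropp, Rabs_pos_eq by lra.
    apply Rmult_le_compat_l; [lra|]. rewrite <- RPow_abs.
    replace (Rabs mu ^ 3) with (Rabs mu * (Rabs mu)^2) by ring.
    rewrite pow2_abs. assert (0 <= Rabs mu) by apply Rabs_pos. nra. }
  nra.
Qed.

Lemma rsum_lin3 n p q r F1 F2 F3 :
  rsum n (fun k => p * F1 k + q * F2 k + r * F3 k) = p * rsum n F1 + q * rsum n F2 + r * rsum n F3.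
Proof. induction n; simpl; [ring|rewrite IHn; ring]. Qed.
Lemma rsum_lin4 n p q r s F1 F2 F3 F4 :
  rsum n (fun k => p * F1 k + q * F2 k + r * F3 k + s * F4 k) = p * rsum n F1 + q * rsum n F2 + r * rsum n F3 + s * rsum n F4.
Proof. induction n; simpl; [ring|rewrite IHn; ring]. Qed.

Lemma bound_g3 n c u v0 B t : 0 < v0 -> 0 <= B -> (forall k, (k < n)%nat -> Rabs (u k) <= B) ->
  let S0 := Sm n c u 0 t in let S1 := Sm n c u 1 t in let S2 := Sm n c u 2 t in let S3 := Sm n c u 3 t in
  let D := v0 + S0 in
  Rabs (S3 / D - 3 * S1 * S2 / (D * D) + 2 * S1 * S1 * S1 / (D * D * D))
  <= 2 * B * (S2 / D - S1 * S1 / (D * D)) /\ 0 <= S2 / D - S1 * S1 / (D * D).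
Proof.
  intros Hv HB Hu S0 S1 S2 S3 D.
  set (E k := exp (c k + u k * t)).
  assert (HE : forall k, 0 < E k) by (intros; apply exp_pos).
  set (mu := S1 / (v0 + S0)).
  assert (H1 : Rabs S1 <= B * S0).
  { unfold S1, S0, Sm. eapply Rle_trans. apply rsum_abs. rewrite <- rsum_scal.
    apply rsum_le. intros k Hk. rewrite Rabs_mult. rewrite (Rabs_pos_eq (exp _)) by (apply Rlt_le, exp_pos).
    simpl. rewrite Rmult_1_r. assert (H := Hu k Hk). assert (0 < exp (c k + u k * t)) by apply exp_pos. nra. }
  assert (HS0 : 0 <= S0) by apply Sm0_nonneg.
  assert (HMu : Rabs mu <= B).
  { unfold mu. rewrite Rabs_div by lra. rewrite (Rabs_pos_eq (v0 + S0)) by lra.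
    apply Rmult_le_reg_r with (v0 + S0); [lra|]. field_simplify; try lra. nra. }
  apply (alg v0 S0 S1 S2 S3 (rsum n (fun k => E k * (u k - mu)^2)) (rsum n (fun k => E k * (u k - mu)^3)) B); auto.
  - apply rsum_nonneg. intros. assert (0 <= (u k - mu)^2) by apply pow2_ge_0. specialize (HE k). nra.
  - rewrite (rsum_ext n _ (fun k => 1 * (u k ^ 2 * E k) + (- 2 * mu) * (u k ^ 1 * E k) + mu ^ 2 * (u k ^ 0 * E k))).
    2:{ intros; simpl; ring. }
    rewrite rsum_lin3. fold mu. unfold S2, S1, S0, Sm. unfold E. ring.
  - rewrite (rsum_ext n _ (fun k => 1 * (u k ^ 3 * E k) + (- 3 * mu) * (u k ^ 2 * E k) + (3 * mu ^ 2) * (u k ^ 1 * E k) + (- mu ^ 3) * (u k ^ 0 * E k))).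
    2:{ intros; simpl; ring. }
    rewrite rsum_lin4. fold mu. unfold S3, S2, S1, S0, Sm. unfold E. ring.
  - eapply Rle_trans. apply rsum_abs. rewrite <- rsum_scal. apply rsum_le. intros k Hk.
    assert (H := Hu k Hk). specialize (HE k).
    assert (Hw : Rabs (u k - mu) <= 2 * B).
    { apply Rabs_le. apply Rabs_le_between in H. apply Rabs_le_between in HMu. lra. }
    rewrite Rabs_mult, (Rabs_pos_eq (E k)) by lra.
    replace ((u k - mu)^3) with ((u k - mu) * (u k - mu)^2) by ring.
    rewrite Rabs_mult, (Rabs_pos_eq ((u k - mu)^2)) by apply pow2_ge_0.
    assert (0 <= (u k - mu)^2) by apply pow2_ge_0.
    assert (Rabs (u k - mu) * (u k - mu)^2 <= 2 * B * (u k - mu)^2) by (apply Rmult_le_compat_r; lra).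
    nra.
Qed.

Lemma rsum_shift n f : rsum (S n) f = f 0%nat + rsum n (fun k => f (S k)).
Proof. induction n; simpl in *; [ring|rewrite IHn; ring]. Qed.

Lemma ln_div' p q : 0 < p -> 0 < q -> ln (p / q) = ln p - ln q.
Proof. intros; unfold Rdiv; rewrite ln_mult, ln_Rinv; try ring; auto; apply Rinv_0_lt_compat; auto. Qed.

Lemma loss_eq d n v0 x y a b t : 0 < v0 -> rsum (S n) y = 1 ->
  let c k := dot d (x (S k)) a in let u k := dot d (x (S k)) b in
  mnl_loss d n v0 x y (fun k => a k + t * b k) =
  - ((y 0%nat * ln v0 + rsum n (fun k => y (S k) * c k)) + t * rsum n (fun k => y (S k) * u k))
  + ln (v0 + Sm n c u 0 t).
Proof.
  intros Hv Hy c u.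
  assert (HD : mnl_denom d n v0 x (fun k => a k + t * b k) = v0 + Sm n c u 0 t).
  { unfold mnl_denom, Sm. f_equal. apply rsum_ext. intros k _. rewrite dot_lin. simpl.
    rewrite Rmult_1_l. f_equal. unfold c, u. ring. }
  assert (Hpos : 0 < v0 + Sm n c u 0 t) by (assert (H0 := Sm0_nonneg n c u t); lra).
  unfold mnl_loss. rewrite rsum_shift. rewrite rsum_shift in Hy. simpl mnl_prob.
  rewrite HD.
  rewrite (rsum_ext n _ (fun k => 1 * (y (S k) * c k) + t * (y (S k) * u k) + (- ln (v0 + Sm n c u 0 t)) * y (S k))).
  2:{ intros k _. rewrite ln_div' by (auto; apply exp_pos). rewrite ln_exp, dot_lin. unfold c, u. ring. }
  rewrite rsum_lin3. rewrite ln_div' by auto.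
  replace (rsum n (fun k => y (S k))) with (1 - y 0%nat) by lra. ring.
Qed.

Theorem propositionD1 (d n : nat) (v0 : R) (x : nat -> nat -> R) (y : nat -> R) :
  0 < v0 ->
  (1 <= n)%nat ->
  (forall i, (1 <= i <= n)%nat -> norm2 d (x i) <= 1) ->
  (forall i, (i <= n)%nat -> y i = 0 \/ y i = 1) ->
  rsum (S n) y = 1 ->
  forall (a b : nat -> R) (s : R),
    Rabs (Derive_n (fun t => mnl_loss d n v0 x y (fun k => a k + t * b k)) 3 s)
    <= 3 * sqrt 2 * norm2 d b
       * Derive_n (fun t => mnl_loss d n v0 x y (fun k => a k + t * b k)) 2 s.
Proof.
  intros Hv _ Hx _ Hy a b s.
  set (c k := dot d (x (S k)) a). set (u k := dot d (x (S k)) b).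
  rewrite !(Derive_n_ext _ _ _ s (fun t => loss_eq d n v0 x y a b t Hv Hy)).
  rewrite f3, f2 by exact Hv.
  set (B := norm2 d b).
  assert (HB : 0 <= B) by apply sqrt_pos.
  assert (Hbb : 0 <= dot d b b) by (apply rsum_nonneg; intros; nra).
  assert (Hu : forall k, (k < n)%nat -> Rabs (u k) <= B).
  { intros k Hk. assert (Hn := Hx (S k) ltac:(lia)). unfold norm2 in Hn.
    assert (Hxx : 0 <= dot d (x (S k)) (x (S k))) by (apply rsum_nonneg; intros; nra).
    assert (Hxx1 : dot d (x (S k)) (x (S k)) <= 1).
    { rewrite <- (pow2_sqrt (dot d (x (S k)) (x (S k)))) by auto.
      assert (0 <= sqrt (dot d (x (S k)) (x (S k)))) by apply sqrt_pos. nra. }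
    assert (Hcs := cs d (x (S k)) b).
    assert (u k ^ 2 <= dot d b b) by (unfold u; nra).
    rewrite <- (sqrt_pow2 (Rabs (u k))) by apply Rabs_pos.
    rewrite pow2_abs. unfold B, norm2. apply sqrt_le_1; auto; apply pow2_ge_0. }
  destruct (bound_g3 n c u v0 B s Hv HB Hu) as [H1 H2].
  assert (Hs2 : 1 <= sqrt 2).
  { rewrite <- sqrt_1. apply sqrt_le_1; lra. }
  eapply Rle_trans. exact H1.
  apply Rmult_le_compat_r; auto. nra.
Qed.
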